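(* Adaptive scale modularity is monotonic for all $M\ge 0$ and $\gamma\ge 2$: for every graph $G=(V,E)$, every clustering $C$ of $G$, and every $C$-consistent improvement $G'=(V,E')$ of $G$ (such that $Q_{M,\gamma}(G,C)$ and $Q_{M,\gamma}(G',C)$ are defined), $Q_{M,\gamma}(G',C)\ge Q_{M,\gamma}(G,C)$.
   Context: A (symmetric weighted) graph is a pair $G=(V,E)$ of a finite set $V$ and $E:V\times V\to\mathbb{R}_{\ge 0}$ symmetric; self loops allowed. A clustering is a partition of $V$ into nonempty disjoint clusters; write $i\sim_C j$ if $i,j$ lie in the same cluster of $C$. For $c\subseteq V$, $v_c=\sum_{i\in c}\sum_{j\in V}E(i,j)$ and $w_c=\sum_{i,j\in c}E(i,j)$. Adaptive scale modularity: $Q_{M,\gamma}(G,C)=\sum_{c\in C}\left(\frac{w_c}{M+\gamma v_c}-\left(\frac{v_c}{M+\gamma v_c}\right)^2\right)$, defined when all denominators are positive. A graph $G'=(V,E')$ is a $C$-consistent improvement of $G=(V,E)$ if $E'(i,j)\ge E(i,j)$ whenever $i\sim_C j$ and $E'(i,j)\le E(i,j)$ whenever $i\not\sim_C j$. *)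

(* Defs.v *)
From mathcomp Require Import all_boot all_order all_algebra.
From mathcomp Require Import reals.
Set Implicit Arguments. Unset Strict Implicit. Unset Printing Implicit Defensive.
Import Order.TTheory GRing.Theory Num.Theory.
Local Open Scope ring_scope.

Definition is_graph (R : realType) (V : finType) (E : V -> V -> R) : Prop :=
  (forall i j, 0 <= E i j) /\ (forall i j, E i j = E j i).

(* A clustering of V: a partition of [set: V] into nonempty disjoint clusters
   (finset's [partition] includes [set0 \notin C]). *)
Definition is_clustering (V : finType) (C : {set {set V}}) : Prop :=
  partition C [set: V].

Definition same_cluster (V : finType) (C : {set {set V}}) (i j : V) : Prop :=
  exists2 c, c \in C & (i \in c) && (j \in c).

Definition vol (R : realType) (V : finType) (E : V -> V -> R) (c : {set V}) : R :=
  \sum_(i in c) \sum_(j : V) E i j.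

Definition wgt (R : realType) (V : finType) (E : V -> V -> R) (c : {set V}) : R :=
  \sum_(i in c) \sum_(j in c) E i j.

Definition asmod (R : realType) (M gamma : R) (V : finType) (E : V -> V -> R)
    (C : {set {set V}}) : R :=
  \sum_(c in C) (wgt E c / (M + gamma * vol E c)
                 - (vol E c / (M + gamma * vol E c)) ^+ 2).

Definition asmod_defined (R : realType) (M gamma : R) (V : finType)
    (E : V -> V -> R) (C : {set {set V}}) : Prop :=
  forall c, c \in C -> 0 < M + gamma * vol E c.

Definition consistent_improvement (R : realType) (V : finType)
    (C : {set {set V}}) (E E' : V -> V -> R) : Prop :=
  forall i j, (same_cluster C i j -> E i j <= E' i j) /\
              (~ same_cluster C i j -> E' i j <= E i j).

(* Main.v *)
Require Import Defs.
From mathcomp Require Import all_boot all_order all_algebra.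
From mathcomp Require Import reals ring lra.
Import Order.TTheory GRing.Theory Num.Theory.
Local Open Scope ring_scope.

Definition fq {R : realType} (M g w v : R) : R :=
  w / (M + g * v) - (v / (M + g * v)) ^+ 2.

Lemma step1 (R : realType) (M g w1 w2 b : R) : 0 <= M -> 2 <= g -> 0 <= b ->
  0 <= w1 -> w1 <= w2 -> 0 < M + g * (w1 + b) ->
  fq M g w1 (w1 + b) <= fq M g w2 (w2 + b).
Proof.
move=> M0 g2 b0 w10 w12 D1p.
have g0 : 0 < g by lra.
have D12 : M + g * (w1 + b) <= M + g * (w2 + b) by nra.
have D2p : 0 < M + g * (w2 + b) by lra.
set K := M + g * b.
have E (wi : R) : 0 < M + g * (wi + b) ->
   fq M g wi (wi + b) = 1/g - K * (M + g * (wi + b))^-1 / g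
        - (1 - M * (M + g * (wi + b))^-1) ^+ 2 / g ^+ 2.
  move=> Dp; rewrite /fq /K; field.
  by apply/andP; split; [lra|rewrite gt_eqF].
rewrite (E w1 D1p) (E w2 D2p).
set t1 := (M + g * (w1 + b))^-1.
set t2 := (M + g * (w2 + b))^-1.
have t10 : 0 <= t1 by rewrite invr_ge0; lra.
have t20 : 0 <= t2 by rewrite invr_ge0; lra.
have t21 : t2 <= t1 by rewrite lef_pV2 ?posrE.
have Mt1 : M * t1 <= 1.
  rewrite /t1 ler_pdivrMr //; nra.
have Mt2 : M * t2 <= 1.
  rewrite /t2 ler_pdivrMr //; nra.
have key : 0 <= (t1 - t2) * (g * K - M * (2 - M * t1 - M * t2)).
  apply: mulr_ge0; first lra.
  rewrite /K; nra.
have gg : 0 < g ^+ 2 by rewrite exprn_gt0.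
suff : 0 <= (1/g - K * t2 / g - (1 - M * t2) ^+ 2 / g ^+ 2)
          - (1/g - K * t1 / g - (1 - M * t1) ^+ 2 / g ^+ 2) by lra.
have -> : (1/g - K * t2 / g - (1 - M * t2) ^+ 2 / g ^+ 2)
          - (1/g - K * t1 / g - (1 - M * t1) ^+ 2 / g ^+ 2)
  = (t1 - t2) * (g * K - M * (2 - M * t1 - M * t2)) / g ^+ 2.
  field; by rewrite gt_eqF.
by apply: divr_ge0 => //; lra.
Qed.

Lemma step2 (R : realType) (M g w v1 v2 : R) : 0 <= M -> 0 < g -> 0 <= w ->
  0 <= v2 -> v2 <= v1 -> 0 < M + g * v2 ->
  fq M g w v1 <= fq M g w v2.
Proof.
move=> M0 g0 w0 v20 v21 D2p.
have D1p : 0 < M + g * v1 by nra.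
rewrite /fq; apply: lerB.
  rewrite ler_pdivrMr // mulrAC ler_pdivlMr //; apply: ler_wpM2l => //; nra.
have h1 : 0 <= v2 / (M + g * v2) by apply: divr_ge0; lra.
have h2 : v2 / (M + g * v2) <= v1 / (M + g * v1).
  rewrite ler_pdivrMr // mulrAC ler_pdivlMr //; nra.
rewrite lerXn2r // ?nnegrE //; apply: le_trans h2.
done.
Qed.
Definition cut {R : realType} {V : finType} (E : V -> V -> R) (c : {set V}) : R :=
  \sum_(i in c) \sum_(j in ~: c) E i j.

Lemma vol_split (R : realType) (V : finType) (E : V -> V -> R) c :
  vol E c = wgt E c + cut E c.
Proof.
rewrite /vol /wgt /cut -big_split /=; apply: eq_bigr => i _.
by rewrite (bigID (fun j => j \in c)) /=; congr (_ + _); apply: eq_bigl => j; rewrite inE.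
Qed.

Theorem theorem6 (R : realType) (M gamma : R) (V : finType)
    (E E' : V -> V -> R) (C : {set {set V}}) :
  0 <= M -> 2 <= gamma ->
  is_graph E -> is_graph E' -> is_clustering C ->
  consistent_improvement C E E' ->
  asmod_defined M gamma E C -> asmod_defined M gamma E' C ->
  asmod M gamma E C <= asmod M gamma E' C.
Proof.
move=> M0 g2 [E0 _] [E'0 _] part ci d1 d2.
rewrite /asmod; apply: ler_sum => c cC.
have := d1 c cC; have := d2 c cC; rewrite !vol_split => D2 D1.
have w0 : 0 <= wgt E c by apply: sumr_ge0 => i _; apply: sumr_ge0.
have b'0 : 0 <= cut E' c by apply: sumr_ge0 => i _; apply: sumr_ge0.
have ww : wgt E c <= wgt E' c.
  apply: ler_sum => i ic; apply: ler_sum => j jc.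
  by apply: (ci i j).1; exists c => //; rewrite ic jc.
have bb : cut E' c <= cut E c.
  apply: ler_sum => i ic; apply: ler_sum => j jc.
  apply: (ci i j).2 => -[c' c'C /andP [ic' jc']].
  move: part; rewrite /is_clustering /partition => /and3P [_ tI _].
  have ec : c = c'.
    apply/eqP; apply: contraT => ne.
    have := trivIsetP tI c c' cC c'C ne.
    by move/disjointFr => /(_ i ic); rewrite ic'.
  by move: jc; rewrite inE ec jc'.
have b0 : 0 <= cut E c by apply: sumr_ge0 => i _; apply: sumr_ge0.
have w'0 : 0 <= wgt E' c by apply: le_trans ww.
have g0 : 0 < gamma by lra.
have S1 := @step1 R M gamma (wgt E c) (wgt E' c) (cut E c) M0 g2 b0 w0 ww D1.
have vv : wgt E' c + cut E' c <= wgt E' c + cut E c by rewrite lerD2l.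
have S2 := @step2 R M gamma (wgt E' c) (wgt E' c + cut E c) (wgt E' c + cut E' c)
  M0 g0 w'0 (addr_ge0 w'0 b'0) vv D2.
exact: le_trans S1 S2.
Qed.
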